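(* Let $n,n_1,n_2\in\mathbb{N}^+$ and $p_1,p_2$ satisfy the standing assumptions below, and put $s_2=n/n_2$. Let $G_{l_1+l_2}$ be the two-layer stochastic block model $G(n,n_1,n_2,p_1,p_2)$, and let $G_{l_1+N}$ be the model $G(n,n_1,1,p_1,p_n)$ with $p_n=\frac{s_2-1}{n-1}\,p_2$, i.e. the layer-1 structure (with the same $n_1$ communities and probability $p_1$) plus uniform random noise in which every pair of nodes is additionally joined independently with probability $p_n$ (so that the expected number of noise edges equals the expected number of edges generated by layer 2 in $G_{l_1+l_2}$). Let $Q^{S}_{l_1}$ and $Q^{R}_{l_1}$ denote the (expected) modularity of the ground-truth layer $l_1$ in $G_{l_1+l_2}$ and in $G_{l_1+N}$ respectively. Then $Q^{S}_{l_1}<Q^{R}_{l_1}$.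
   Context: Multi-layer stochastic block model $G(n,n_1,\dots,n_L,p_1,\dots,p_L)$: a random graph on $n$ nodes with $L$ layers. For each layer $l$ the nodes are partitioned into $n_l$ planted communities of size $s_l=n/n_l$; independently for each layer, each pair of distinct nodes in a common community of layer $l$ receives an edge from layer $l$ with probability $p_l$; the graph is the simple union of all generated edges, so a pair of nodes lying in a common community of exactly the layers in a set $T$ is an edge with probability $1-\prod_{l\in T}(1-p_l)$. The partitions of different layers are independent: for any $k\ge 2$ distinct layers $l_1,\dots,l_k$ and any choice of one community from each, the intersection of these communities has $r_{l_1\cdots l_k}=n/(n_{l_1}\cdots n_{l_k})$ nodes (in expectation). Standing assumptions (for the layers of the block model): $n_l\ge 4$, $p_l\in[0.05,1]$, and $n\ge 2\prod_l n_l$. Modularity: for a partition (layer) $l$ of the nodes of a graph with $e$ edges, if community $i$ has $e^i_{ll}$ internal edges, $e^i_{lout}$ edges with exactly one endpoint in it, and total degree $d^i_l=2e^i_{ll}+e^i_{lout}$, then $Q_l=\sum_i\big(\frac{e^i_{ll}}{e}-(\frac{d^i_l}{2e})^2\big)$. In the block model all quantities are replaced by expectations: writing $e_{ll}$, $e_{lout}$ for the expected numbers of internal and outgoing edges of one community of layer $l$ (identical for all communities of the layer), $d_l=2e_{ll}+e_{lout}$ and $e=n_ld_l/2$, the (expected) modularity of layer $l$ is $Q_l=n_l\big[\frac{e_{ll}}{e}-(\frac{d_l}{2e})^2\big]$. *)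

(* Defs.v *)
From Stdlib Require Import Reals Lra.
Open Scope R_scope.

(* Two-layer stochastic block model G(n, n1, n2, p1, p2).  All quantities are
   the expectations described in the paper; divisions are real divisions. *)

Definition comm_size (n nl : nat) : R := INR n / INR nl.
(* expected intersection of a layer-1 and a layer-2 community: r12 = n/(n1 n2) *)
Definition inter_size (n n1 n2 : nat) : R := INR n / (INR n1 * INR n2).

(* number of pairs inside one layer-1 community that also share a layer-2
   community: n2 * r12 (r12 - 1) / 2 *)
Definition shared_pairs (n n1 n2 : nat) : R :=
  INR n2 * (inter_size n n1 n2 * (inter_size n n1 n2 - 1) / 2).

(* expected number of internal edges e_{l1 l1} of one layer-1 community:
   pairs sharing only the layer-1 community get probability p1, pairs sharing
   both communities get probability 1-(1-p1)(1-p2). *)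
Definition e_in1 (n n1 n2 : nat) (p1 p2 : R) : R :=
  (comm_size n n1 * (comm_size n n1 - 1) / 2 - shared_pairs n n1 n2) * p1
  + shared_pairs n n1 n2 * (1 - (1 - p1) * (1 - p2)).

(* expected number of outgoing edges e_{l1 out} of one layer-1 community:
   pairs (u in C, v notin C) sharing a layer-2 community, with probability p2. *)
Definition e_out1 (n n1 n2 : nat) (p1 p2 : R) : R :=
  INR n2 * (inter_size n n1 n2 * (comm_size n n2 - inter_size n n1 n2)) * p2.

Definition deg1 (n n1 n2 : nat) (p1 p2 : R) : R :=
  2 * e_in1 n n1 n2 p1 p2 + e_out1 n n1 n2 p1 p2.

Definition total_edges1 (n n1 n2 : nat) (p1 p2 : R) : R :=
  INR n1 * deg1 n n1 n2 p1 p2 / 2.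

Definition Q_layer1 (n n1 n2 : nat) (p1 p2 : R) : R :=
  INR n1 * (e_in1 n n1 n2 p1 p2 / total_edges1 n n1 n2 p1 p2
            - (deg1 n n1 n2 p1 p2 / (2 * total_edges1 n n1 n2 p1 p2)) ^ 2).

Definition noise_prob (n n2 : nat) (p2 : R) : R :=
  (comm_size n n2 - 1) / (INR n - 1) * p2.

(* Main.v *)
Require Import Defs.
From Stdlib Require Import Reals Lra Lia Psatz.
Open Scope R_scope.

Lemma Qform (n n1 n2 : nat) (p1 p2 : R) :
  INR n1 <> 0 -> deg1 n n1 n2 p1 p2 <> 0 ->
  Q_layer1 n n1 n2 p1 p2 =
  2 * e_in1 n n1 n2 p1 p2 / (2 * e_in1 n n1 n2 p1 p2 + e_out1 n n1 n2 p1 p2) - 1 / INR n1.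
Proof.
  intros Ha Hd. unfold Q_layer1, total_edges1. unfold deg1 in *. field. split; auto.
Qed.

Theorem theorem8 (n n1 n2 : nat) (p1 p2 : R) :
  (4 <= n1)%nat -> (4 <= n2)%nat ->
  (2 * (n1 * n2) <= n)%nat ->
  1/20 <= p1 <= 1 -> 1/20 <= p2 <= 1 ->
  Q_layer1 n n1 n2 p1 p2 < Q_layer1 n n1 1 p1 (noise_prob n n2 p2).
Proof.
  intros Ha Hb Hn [Hp1 Hp1'] [Hp2 Hp2'].
  assert (HA : 4 <= INR n1) by (replace 4 with (INR 4) by (simpl; lra); apply le_INR; lia).
  assert (HB : 4 <= INR n2) by (replace 4 with (INR 4) by (simpl; lra); apply le_INR; lia).
  assert (HN : 2 * (INR n1 * INR n2) <= INR n).
  { replace 2 with (INR 2) by (simpl; lra). rewrite <- !mult_INR. apply le_INR; lia. }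
  set (A := INR n1) in *. set (B := INR n2) in *. set (N := INR n) in *.
  set (r := N / (A * B)).
  assert (HNr : N = A * B * r) by (unfold r; field; lra).
  assert (Hr : 2 <= r).
  { unfold r. apply Rmult_le_reg_r with (A*B). nra.
    unfold Rdiv. rewrite Rmult_assoc, Rinv_l by nra. lra. }
  assert (HAB : 16 <= A * B) by nra.
  assert (HABr : 31 <= A * B * r - 1) by nra.
  assert (HAr : 7 <= A * r - 1) by nra.
  set (c := noise_prob n n2 p2).
  assert (Hc : c * (A * B * r - 1) = (A * r - 1) * p2).
  { unfold c, noise_prob, comm_size. fold N B. rewrite HNr. field. split; nra. }
  assert (Hcpos : 0 < c).
  { apply Rmult_lt_reg_r with (A*B*r-1). lra. rewrite Hc. nra. }
  assert (Hbc : 0 < p2 - B * c).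
  { apply Rmult_lt_reg_r with (A*B*r-1). lra.
    replace ((p2 - B * c) * (A * B * r - 1)) with (p2*(A*B*r-1) - B*(c*(A*B*r-1))) by ring.
    rewrite Hc. nra. }
  assert (E1 : e_in1 n n1 n2 p1 p2 = B*r/2 * (p1*(B*r-1) + (r-1)*p2*(1-p1))).
  { unfold e_in1, shared_pairs, inter_size, comm_size. fold A B N. rewrite HNr. field. lra. }
  assert (O1 : e_out1 n n1 n2 p1 p2 = B*r*r*(A-1)*p2).
  { unfold e_out1, inter_size, comm_size. fold A B N. rewrite HNr. field. lra. }
  assert (E2 : e_in1 n n1 1 p1 c = B*r*(B*r-1)/2 * (p1 + c*(1-p1))).
  { unfold e_in1, shared_pairs, inter_size, comm_size. fold A N. rewrite HNr. simpl. field. lra. }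
  assert (O2 : e_out1 n n1 1 p1 c = B*B*r*r*(A-1)*c).
  { unfold e_out1, inter_size, comm_size. fold A N. rewrite HNr. simpl. field. lra. }
  assert (HBr : 7 <= B * r - 1) by nra.
  clearbody r c.
  assert (P1a : 0 < p1*(B*r-1)) by nra.
  assert (P1b : 0 <= (r-1)*p2*(1-p1)) by (repeat apply Rmult_le_pos; lra).
  assert (P1 : 0 < p1*(B*r-1) + (r-1)*p2*(1-p1)) by lra.
  assert (P2b : 0 <= c*(1-p1)) by (apply Rmult_le_pos; lra).
  assert (P2 : 0 < p1 + c*(1-p1)) by nra.
  assert (HeS : 0 < e_in1 n n1 n2 p1 p2) by (rewrite E1; apply Rmult_lt_0_compat; nra).
  assert (HoS : 0 < e_out1 n n1 n2 p1 p2) by (rewrite O1; repeat apply Rmult_lt_0_compat; lra).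
  assert (HeR : 0 < e_in1 n n1 1 p1 c) by (rewrite E2; apply Rmult_lt_0_compat; nra).
  assert (HoR : 0 < e_out1 n n1 1 p1 c) by (rewrite O2; repeat apply Rmult_lt_0_compat; lra).
  rewrite !Qform; try (unfold A in HA; lra); try (unfold deg1; lra).
  apply Rplus_lt_compat_r.
  set (eS := e_in1 n n1 n2 p1 p2) in *. set (oS := e_out1 n n1 n2 p1 p2) in *.
  set (eR := e_in1 n n1 1 p1 c) in *. set (oR := e_out1 n n1 1 p1 c) in *.
  assert (key : eS * oR < eR * oS).
  { rewrite E1, O1, E2, O2.
    assert (ID : B*r*(B*r-1)/2*(p1+c*(1-p1)) * (B*r*r*(A-1)*p2)
               - B*r/2*(p1*(B*r-1)+(r-1)*p2*(1-p1)) * (B*B*r*r*(A-1)*c)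
               = B*B*r*r*r*(A-1)/2 * (p1*(B*r-1)*(p2-B*c) + p2*c*(1-p1)*(B-1))) by field.
    assert (0 < B*B*r*r*r*(A-1)/2) by (repeat apply Rmult_lt_0_compat; nra).
    assert (0 < p1*(B*r-1)*(p2-B*c)) by (repeat apply Rmult_lt_0_compat; nra).
    assert (0 <= p2*c*(1-p1)*(B-1)) by (repeat apply Rmult_le_pos; nra).
    nra. }
  unfold Rdiv. apply Rmult_lt_reg_r with ((2*eS+oS)*(2*eR+oR)). nra.
  replace (2 * eS * / (2 * eS + oS) * ((2 * eS + oS) * (2 * eR + oR))) with (2*eS*(2*eR+oR)) by (field; lra).
  replace (2 * eR * / (2 * eR + oR) * ((2 * eS + oS) * (2 * eR + oR))) with (2*eR*(2*eS+oS)) by (field; lra).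
  nra.
Qed.
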